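(* Let $m,n$ be positive integers, let $D$ be an $m\times n$ diagram, and let $\sigma\in S_{m+n}$ be its restricted permutation. Then $\ker(P_\omega+P_\sigma)\cong\ker(M(D))$ as $\mathbb{Q}$-vector spaces; in particular they have the same dimension.
   Context: An $m\times n$ diagram is an $m\times n$ grid of squares, each coloured black or white. Rows are numbered top to bottom and columns left to right. Pipe dreams: on each white square place two arcs, one joining its bottom and left edge midpoints and one joining its top and right edge midpoints. On each black square place a cross, i.e. a vertical segment joining its bottom and top midpoints and a horizontal segment joining its left and right midpoints. Label the boundary as follows: the row that is $r$-th from the bottom gets label $r$ at its left end and $n+r$ at its right end; column $j$ gets label $m+j$ at its top and $j$ at its bottom. The restricted permutation $\sigma$ of $D$ sends a label $i$ on the bottom or right side to the label on the left or top side where the pipe entering at $i$ exits (going straight through crosses). The permutation $\omega$ is defined by $\omega(i)=m+i$ for $1\le i\le n$ and $\omega(i)=i-n$ for $n<i\le m+n$. For $\mu\in S_k$, $P_\mu$ is the $k\times k$ matrix with $P_\mu[i,j]=\delta_{j,\mu(i)}$. If $D$ has $N$ white squares, label them bijectively by $[N]$. Then $M(D)$ is the $N\times N$ skew-symmetric matrix whose entries are as follows. $M(D)[i,j]=1$ if white square $i$ lies strictly below square $j$ in the same column or strictly to the right of square $j$ in the same row. $M(D)[i,j]=-1$ if square $i$ lies strictly above square $j$ in the same column or strictly to the left of it in the same row. $M(D)[i,j]=0$ otherwise. *)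

(* Defs.v *)
From mathcomp Require Import all_boot all_order all_algebra.
Set Implicit Arguments. Unset Strict Implicit. Unset Printing Implicit Defensive.
Import GRing.Theory Num.Theory.
Local Open Scope ring_scope.

(* A diagram is an m x n boolean matrix; D i j = true means square (i,j) is
   black.  Rows are indexed 0..m-1 top to bottom, columns 0..n-1 left to right
   (0-based version of the paper's numbering). *)
Definition diagram (m n : nat) := 'M[bool]_(m, n).

Definition blackn (m n : nat) (D : diagram m n) (i j : nat) : bool :=
  match @insub nat (fun k => k < m)%N 'I_m i, @insub nat (fun k => k < n)%N 'I_n j with
  | Some i', Some j' => D i' j'
  | _, _ => false
  end.

(* The pipe is in cell (i,j); [up] = true means it entered the
   cell from its bottom edge (travelling upward), [up] = false means it entered
   from the right edge (travelling leftward).  A white square turns the pipe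
   (bottom->left, right->top), a black square lets it go straight.  The result
   is the (1-based) boundary label where the pipe exits: the left end of the
   row r-th from the bottom has label r = m - i, the top of column j (0-based)
   has label m + j + 1.  The fuel m + n suffices since each step moves the
   pipe one cell up or left. *)
Fixpoint trace (m n : nat) (D : diagram m n) (fuel i j : nat) (up : bool) : nat :=
  match fuel with
  | 0 => 0
  | S f =>
      let up' := if blackn D i j then up else ~~ up in
      if up' then
        (if i is S i' then trace D f i' j up' else (m + j.+1)%N)
      else
        (if j is S j' then trace D f i j' up' else (m - i)%N)
  end.

(* Restricted permutation sigma on labels 1..m+n:
   label j (1 <= j <= n) = bottom of column j: pipe enters cell (m-1, j-1) going up;
   label n + r (1 <= r <= m) = right end of the row r-th from the bottom, i.e. row
   index m - r: pipe enters cell (m-r, n-1) going left. *)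
Definition restricted_perm (m n : nat) (D : diagram m n) (l : nat) : nat :=
  if (l <= n)%N then trace D (m + n) (m.-1) (l.-1) true
  else trace D (m + n) (m - (l - n)) (n.-1) false.

Definition omega (m n : nat) (l : nat) : nat :=
  if (l <= n)%N then (m + l)%N else (l - n)%N.

(* Permutation matrix P_mu[i,j] = delta_{j, mu(i)} for labels 1..k;
   index i : 'I_k stands for label i+1. *)
Definition perm_matrix (k : nat) (mu : nat -> nat) : 'M[rat]_k :=
  \matrix_(i < k, j < k) (((j : nat).+1 == mu (i : nat).+1) : nat)%:R.

Definition MD (m n : nat) (D : diagram m n) (N : nat)
  (lab : 'I_N -> 'I_m * 'I_n) : 'M[rat]_N :=
  \matrix_(a < N, b < N)
    let: (ia, ja) := lab a in let: (ib, jb) := lab b in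
    if ((ja == jb) && (ib < ia)%N) || ((ia == ib) && (jb < ja)%N) then 1
    else if ((ja == jb) && (ia < ib)%N) || ((ia == ib) && (ja < jb)%N) then -1
    else 0.

(* Dimension of the (right) kernel {x | A x = 0} of a square rational matrix:
   mathcomp's kermx A spans the left kernel, so we use kermx A^T. *)
Definition kerdim (k : nat) (A : 'M[rat]_k) : nat := \rank (kermx A^T).

(* Main.v *)
Require Import Defs.
From mathcomp Require Import all_boot all_order all_algebra.
From mathcomp Require Import zify ring lra.
Set Implicit Arguments. Unset Strict Implicit. Unset Printing Implicit Defensive.
Import GRing.Theory Num.Theory.
Local Open Scope ring_scope.

Definition oT m n (D : diagram m n) f i j :=
  if i is i'.+1 then trace D f i' j true else (m + j.+1)%N.
Definition oL m n (D : diagram m n) f i j :=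
  if j is j'.+1 then trace D f i j' false else (m - i)%N.

Lemma trace_S m n (D : diagram m n) f i j up :
  trace D f.+1 i j up = if (if blackn D i j then up else ~~ up)
                        then oT D f i j else oL D f i j.
Proof. by rewrite /=; case: (blackn D i j); case: up. Qed.

Lemma trace_fuel m n (D : diagram m n) f g i j up :
  (i + j < f)%N -> (i + j < g)%N -> trace D f i j up = trace D g i j up.
Proof.
elim: f g i j up => [|f IH] [|g] i j up //= Hf Hg.
rewrite -/(trace D f.+1 i j up) -/(trace D g.+1 i j up) !trace_S.
case: (if blackn D i j then up else ~~ up).
  case: i Hf Hg => [|i] Hf Hg //=; apply: IH; lia.
case: j Hf Hg => [|j] Hf Hg //=; apply: IH; lia.
Qed.

Lemma oT_fuel m n (D : diagram m n) f g i j :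
  (i + j <= f)%N -> (i + j <= g)%N -> oT D f i j = oT D g i j.
Proof. case: i => [|i] //= Hf Hg; apply: trace_fuel; lia. Qed.
Lemma oL_fuel m n (D : diagram m n) f g i j :
  (i + j <= f)%N -> (i + j <= g)%N -> oL D f i j = oL D g i j.
Proof. case: j => [|j] //= Hf Hg; apply: trace_fuel; lia. Qed.

Definition OT m n (D : diagram m n) i j := oT D (m + n) i j.
Definition OL m n (D : diagram m n) i j := oL D (m + n) i j.

Lemma OT_step m n (D : diagram m n) i j : (i < m)%N -> (j < n)%N ->
  OT D i.+1 j = if blackn D i j then OT D i j else OL D i j.
Proof.
move=> Hi Hj; rewrite /OT /=.
have E : (m + n = (m + n).-1.+1)%N by lia.
rewrite {1}E trace_S; case: (blackn D i j) => /=.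
  apply: oT_fuel; lia.
apply: oL_fuel; lia.
Qed.

Lemma OL_step m n (D : diagram m n) i j : (i < m)%N -> (j < n)%N ->
  OL D i j.+1 = if blackn D i j then OL D i j else OT D i j.
Proof.
move=> Hi Hj; rewrite /OL /=.
have E : (m + n = (m + n).-1.+1)%N by lia.
rewrite {1}E trace_S; case: (blackn D i j) => /=.
  apply: oL_fuel; lia.
apply: oT_fuel; lia.
Qed.

Lemma sigma_bot m n (D : diagram m n) j : (0 < m)%N -> (j < n)%N ->
  restricted_perm D j.+1 = OT D m j.
Proof.
move=> hm hj; rewrite /restricted_perm /OT ifT //.
by case: m D hm {hj} => [|m] D.
Qed.

Lemma sigma_right m n (D : diagram m n) k : (0 < n)%N -> (n <= k)%N ->
  restricted_perm D k.+1 = OL D (m - (k.+1 - n)) n.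
Proof.
move=> hn hk; rewrite /restricted_perm /OL ifF; last lia.
by case: n D hn hk => [|n] D.
Qed.

Definition Asum (X : nat -> nat -> rat) i j := \sum_(k < i) X (k : nat) j.
Definition Bsum (X : nat -> nat -> rat) i j := \sum_(k < j) X i (k : nat).

Lemma AsumS X i j : Asum X i.+1 j = Asum X i j + X i j.
Proof. by rewrite /Asum big_ord_recr. Qed.
Lemma BsumS X i j : Bsum X i j.+1 = Bsum X i j + X i j.
Proof. by rewrite /Bsum big_ord_recr. Qed.
Lemma Asum0 X j : Asum X 0 j = 0.
Proof. by rewrite /Asum big_ord0. Qed.
Lemma Bsum0 X i : Bsum X i 0 = 0.
Proof. by rewrite /Bsum big_ord0. Qed.

Lemma dir1 m n (D : diagram m n) (X : nat -> nat -> rat) (W : nat -> rat) :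
  (forall i j, (i<m)%N -> (j<n)%N -> blackn D i j -> X i j = 0) ->
  (forall i j, (i<m)%N -> (j<n)%N -> ~~ blackn D i j ->
     2 * Asum X i j + 2 * Bsum X i j + 2 * X i j - Asum X m j - Bsum X i n = 0) ->
  (forall j, (j<n)%N -> W (m + j.+1)%N = Asum X m j) ->
  (forall i, (i<m)%N -> W (m - i)%N = - Bsum X i n) ->
  forall s i j, (i + j = s)%N ->
   ((i <= m)%N -> (j < n)%N -> Asum X i j - Asum X m j / 2 = - W (OT D i j) / 2) /\
   ((i < m)%N -> (j <= n)%N -> Bsum X i j - Bsum X i n / 2 = W (OL D i j) / 2).
Proof.
move=> hX hM hWT hWL s; elim: s => [|s IH] i j Hs.
  have -> : i = 0%N by lia. have -> : j = 0%N by lia.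
  split=> H1 H2; rewrite /OT /OL /=.
    rewrite Asum0 hWT //; lra.
  rewrite Bsum0 hWL //; lra.
split=> H1 H2.
  case: i Hs H1 => [|i] Hs H1.
    rewrite Asum0 /OT /= hWT //; lra.
  have [IHT IHL] := IH i j (ltac:(lia)).
  rewrite AsumS OT_step; try lia.
  case Hb: (blackn D i j).
    rewrite hX //; try lia. rewrite addr0; apply: IHT; lia.
  have := hM i j (ltac:(lia)) H2 (negbT Hb).
  have := IHL (ltac:(lia)) (ltac:(lia)). lra.
case: j Hs H2 => [|j] Hs H2.
  rewrite Bsum0 /OL /= hWL //; lra.
have [IHT IHL] := IH i j (ltac:(lia)).
rewrite BsumS OL_step; try lia.
case Hb: (blackn D i j).
  rewrite hX //; try lia. rewrite addr0; apply: IHL; lia.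
have := hM i j H1 (ltac:(lia)) (negbT Hb).
have := IHT (ltac:(lia)) (ltac:(lia)). lra.
Qed.

Lemma dir2 m n (D : diagram m n) (X : nat -> nat -> rat) (W : nat -> rat) :
  (forall i j, (i<m)%N -> (j<n)%N ->
     X i j = if blackn D i j then 0 else (W (OT D i j) - W (OL D i j)) / 2) ->
  (forall i j, (i <= m)%N -> (j < n)%N -> Asum X i j = (W (m + j.+1)%N - W (OT D i j)) / 2) /\
  (forall i j, (i < m)%N -> (j <= n)%N -> Bsum X i j = (W (OL D i j) - W (m - i)%N) / 2).
Proof.
move=> hX; split.
  move=> i j; elim: i => [|i IH] H1 H2.
    rewrite Asum0 /OT /=; lra.
  rewrite AsumS OT_step; try lia. rewrite hX; try lia. rewrite IH; try lia.
  case: (blackn D i j); lra.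
move=> i j; elim: j => [|j IH] H1 H2.
  rewrite Bsum0 /OL /=; lra.
rewrite BsumS OL_step; try lia. rewrite hX; try lia. rewrite IH; try lia.
case: (blackn D i j); lra.
Qed.

Lemma kerdim_le k1 k2 (A1 : 'M[rat]_k1) (A2 : 'M[rat]_k2) (F : 'M_(k1,k2)) (G : 'M_(k2,k1)) :
 (forall u : 'rV_k1, u *m A1^T = 0 -> (u *m F) *m A2^T = 0 /\ u *m F *m G = u) ->
 (kerdim A1 <= kerdim A2)%N.
Proof.
move=> H; rewrite /kerdim.
have Hrow : forall i, row i (kermx A1^T) *m A1^T = 0 by move=> i; apply/sub_kermxP; exact: row_sub.
move: (kermx A1^T) Hrow => K1 Hrow.
have E : K1 *m F *m G = K1.
  apply/row_matrixP => i; rewrite !row_mul. by have [_ ->] := H _ (Hrow i).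
have S : (K1 *m F <= kermx A2^T)%MS.
  apply/row_subP => i; rewrite row_mul; apply/sub_kermxP.
  by have [-> _] := H _ (Hrow i).
rewrite -{1}E; apply: leq_trans (mxrankM_maxl _ _) _; exact: mxrankS.
Qed.

Definition Wof k (u : 'rV[rat]_k) (l : nat) : rat :=
  \sum_(j < k) u 0 j * (((j : nat).+1 == l) : nat)%:R.

Lemma Wof_val k (u : 'rV[rat]_k) (j : 'I_k) : Wof u (j : nat).+1 = u 0 j.
Proof.
rewrite /Wof (bigD1 j) //= eqxx mulr1 big1 ?addr0 // => i ne.
by rewrite eqSS val_eqE (negbTE ne) mulr0.
Qed.

Lemma mulmx_trE k1 k2 (u : 'rV[rat]_k1) (A : 'M[rat]_(k2, k1)) i :
  (u *m A^T) 0 i = \sum_j u 0 j * A i j.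
Proof. by rewrite mxE; apply: eq_bigr => j _; rewrite mxE. Qed.

Lemma rowv0 k (v : 'rV[rat]_k) : v = 0 <-> forall i, v 0 i = 0.
Proof.
split=> [-> i|H]; first by rewrite mxE.
by apply/rowP => i; rewrite H mxE.
Qed.

Lemma blackn_ord m n (D : diagram m n) (i : 'I_m) (j : 'I_n) :
  blackn D i j = D i j.
Proof. by rewrite /blackn !valK. Qed.

Lemma P_rowE m n (D : diagram m n) (u : 'rV[rat]_(m+n)) i :
  (u *m (perm_matrix (m + n) (omega m n) + perm_matrix (m + n) (restricted_perm D))^T) 0 i
  = Wof u (omega m n (i : nat).+1) + Wof u (restricted_perm D (i : nat).+1).
Proof.
rewrite mulmx_trE /Wof -big_split /=; apply: eq_bigr => j _.
by rewrite !mxE mulrDr.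
Qed.

Lemma Pker m n (D : diagram m n) (hm : (0 < m)%N) (hn : (0 < n)%N) (u : 'rV[rat]_(m+n)) :
  u *m (perm_matrix (m + n) (omega m n) + perm_matrix (m + n) (restricted_perm D))^T = 0
  <-> (forall j, (j < n)%N -> Wof u (m + j.+1)%N + Wof u (OT D m j) = 0) /\
      (forall i, (i < m)%N -> Wof u (m - i)%N + Wof u (OL D i n) = 0).
Proof.
rewrite rowv0; split.
  move=> H; split.
    move=> j hj; have hk : (j < m + n)%N by lia.
    have := H (Ordinal hk); rewrite P_rowE /= /omega ifT // sigma_bot //.
  move=> i hi; have hk : (n + (m - i.+1) < m + n)%N by lia.
  have := H (Ordinal hk); rewrite P_rowE /= /omega ifF; last lia.
  rewrite sigma_right //; last lia.
  have -> : ((n + (m - i.+1)).+1 - n = m - i)%N by lia.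
  have -> : (m - (m - i) = i)%N by lia. done.
move=> [HT HL] k; rewrite P_rowE /omega.
case: (leqP (k : nat).+1 n) => hk.
  have := HT k hk; rewrite sigma_bot //.
rewrite sigma_right //. have hk2 := ltn_ord k.
have := HL (m - ((k : nat).+1 - n))%N (ltac:(lia)).
have -> : (m - (m - ((k : nat).+1 - n)) = (k : nat).+1 - n)%N by lia. done.
Qed.

Definition ind (b : bool) : rat := (b : nat)%:R.

Definition mdf m n (c d : 'I_m * 'I_n) : rat :=
  ind ((d.1 : nat) < c.1)%N * ind ((d.2 : nat) == c.2)
  + ind ((d.1 : nat) == c.1) * ind ((d.2 : nat) < c.2)%N
  - (1 - ind ((d.1 : nat) < (c.1 : nat).+1)%N) * ind ((d.2 : nat) == c.2)
  - ind ((d.1 : nat) == c.1) * (1 - ind ((d.2 : nat) < (c.2 : nat).+1)%N).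

Lemma MD_E m n (D : diagram m n) N (lab : 'I_N -> 'I_m * 'I_n) a b :
  MD D lab a b = mdf (lab a) (lab b).
Proof.
rewrite mxE /mdf; case: (lab a) => ia ja; case: (lab b) => ib jb /=.
have -> : (ja == jb) = (ja == jb :> nat) by [].
have -> : (ia == ib) = (ia == ib :> nat) by [].
rewrite /ind !ltnS.
case: (ltngtP ia ib) => [h1|h1|]; case: (ltngtP ja jb) => [h2|h2|] /=; lra.
Qed.

Definition Xof N m n (lab : 'I_N -> 'I_m * 'I_n) (x : 'rV[rat]_N) (i j : nat) : rat :=
  \sum_b x 0 b * ind (((lab b).1 : nat) == i) * ind (((lab b).2 : nat) == j).

Lemma ind_sum c i : \sum_(k < i) ind (c == (k : nat)) = ind (c < i)%N.
Proof.
elim: i => [|i IH]; first by rewrite big_ord0 /ind ltn0.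
rewrite big_ord_recr /= IH /ind ltnS.
case: (ltngtP c i) => h /=; lra.
Qed.

Lemma Asum_E N m n (lab : 'I_N -> 'I_m * 'I_n) x i j :
  Asum (Xof lab x) i j = \sum_b x 0 b * ind ((lab b).1 < i)%N * ind (((lab b).2 : nat) == j).
Proof.
rewrite /Asum /Xof exchange_big; apply: eq_bigr => b _.
by rewrite -mulr_suml -mulr_sumr ind_sum.
Qed.

Lemma Bsum_E N m n (lab : 'I_N -> 'I_m * 'I_n) x i j :
  Bsum (Xof lab x) i j = \sum_b x 0 b * ind (((lab b).1 : nat) == i) * ind ((lab b).2 < j)%N.
Proof.
rewrite /Bsum /Xof exchange_big; apply: eq_bigr => b _.
by rewrite -mulr_sumr ind_sum.
Qed.

Lemma MD_row m n (D : diagram m n) N (lab : 'I_N -> 'I_m * 'I_n) (x : 'rV[rat]_N) a :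
  (x *m (MD D lab)^T) 0 a =
  2 * Asum (Xof lab x) (lab a).1 (lab a).2 + 2 * Bsum (Xof lab x) (lab a).1 (lab a).2
  + 2 * Xof lab x (lab a).1 (lab a).2
  - Asum (Xof lab x) m (lab a).2 - Bsum (Xof lab x) (lab a).1 n.
Proof.
set X := Xof lab x.
have -> : 2 * Asum X (lab a).1 (lab a).2 + 2 * Bsum X (lab a).1 (lab a).2
  + 2 * X (lab a).1 (lab a).2 - Asum X m (lab a).2 - Bsum X (lab a).1 n
  = Asum X (lab a).1 (lab a).2 + Bsum X (lab a).1 (lab a).2
    - (Asum X m (lab a).2 - Asum X ((lab a).1 : nat).+1 (lab a).2)
    - (Bsum X (lab a).1 n - Bsum X (lab a).1 ((lab a).2 : nat).+1).
  rewrite AsumS BsumS; lra.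
rewrite /X !Asum_E !Bsum_E mulmx_trE.
rewrite (eq_bigr (fun b =>
  (x 0 b * ind ((lab b).1 < (lab a).1)%N * ind (((lab b).2 : nat) == (lab a).2)
  + x 0 b * ind (((lab b).1 : nat) == (lab a).1) * ind ((lab b).2 < (lab a).2)%N)
  - (x 0 b * ind ((lab b).1 < m)%N * ind (((lab b).2 : nat) == (lab a).2)
     - x 0 b * ind ((lab b).1 < ((lab a).1 : nat).+1)%N * ind (((lab b).2 : nat) == (lab a).2))
  - (x 0 b * ind (((lab b).1 : nat) == (lab a).1) * ind ((lab b).2 < n)%N
     - x 0 b * ind (((lab b).1 : nat) == (lab a).1) * ind ((lab b).2 < ((lab a).2 : nat).+1)%N))).
  by rewrite !sumrB big_split.
move=> b _; rewrite MD_E /mdf !ltn_ord /ind /=; ring.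
Qed.

Lemma Xof_black m n (D : diagram m n) N (lab : 'I_N -> 'I_m * 'I_n)
  (lab_onto : forall c : 'I_m * 'I_n, ~~ D c.1 c.2 <-> exists k, lab k = c) x i j :
  blackn D i j -> Xof lab x i j = 0.
Proof.
move=> Hb; rewrite /Xof big1 // => b _; rewrite /ind.
case: eqP => [e1|_]; last by rewrite mulr0 mul0r.
case: eqP => [e2|_]; last by rewrite mulr0.
have : ~~ D (lab b).1 (lab b).2 by apply/lab_onto; exists b.
by rewrite -blackn_ord e1 e2 Hb.
Qed.

Lemma Xof_lab m n N (lab : 'I_N -> 'I_m * 'I_n) (lab_inj : injective lab) x a :
  Xof lab x (lab a).1 (lab a).2 = x 0 a.
Proof.
rewrite /Xof (bigD1 a) //= !eqxx /ind /= !mulr1 big1 ?addr0 // => b nb.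
case: eqP => [e1|_]; last by rewrite mulr0 mul0r.
case: eqP => [e2|_]; last by rewrite mulr0.
have E : lab b = lab a.
  move: e1 e2; case: (lab b) => b1 b2; case: (lab a) => a1 a2 /= e1 e2.
  by congr pair; apply: val_inj.
by move/lab_inj: E => E; rewrite E eqxx in nb.
Qed.

Lemma Col_E N m n (lab : 'I_N -> 'I_m * 'I_n) x j :
  Asum (Xof lab x) m j = \sum_b x 0 b * ind (((lab b).2 : nat) == j).
Proof. by rewrite Asum_E; apply: eq_bigr => b _; rewrite ltn_ord /ind mulr1. Qed.

Lemma Row_E N m n (lab : 'I_N -> 'I_m * 'I_n) x i :
  Bsum (Xof lab x) i n = \sum_b x 0 b * ind (((lab b).1 : nat) == i).
Proof. by rewrite Bsum_E; apply: eq_bigr => b _; rewrite ltn_ord /ind mulr1. Qed.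

Definition Fm m n N (lab : 'I_N -> 'I_m * 'I_n) : 'M[rat]_(N, m + n) :=
  \matrix_(a, k) (if (m <= k)%N then ind (((lab a).2 : nat) == (k : nat) - m)%N
                  else - ind (((lab a).1 : nat) == m - (k : nat).+1)%N).

Lemma Fm_E m n N (lab : 'I_N -> 'I_m * 'I_n) (x : 'rV[rat]_N) k :
  (x *m Fm lab) 0 k = if (m <= k)%N then Asum (Xof lab x) m ((k : nat) - m)
                      else - Bsum (Xof lab x) (m - (k : nat).+1) n.
Proof.
rewrite mxE Col_E Row_E; case: ifP => hk.
  by apply: eq_bigr => b _; rewrite mxE hk.
rewrite -sumrN; apply: eq_bigr => b _; rewrite mxE hk mulrN //.
Qed.

Definition Gm m n (D : diagram m n) N (lab : 'I_N -> 'I_m * 'I_n) : 'M[rat]_(m + n, N) :=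
  \matrix_(k, a) ((ind ((k : nat).+1 == OT D (lab a).1 (lab a).2)
                  - ind ((k : nat).+1 == OL D (lab a).1 (lab a).2)) / 2).

Lemma Gm_E m n (D : diagram m n) N (lab : 'I_N -> 'I_m * 'I_n) (v : 'rV[rat]_(m+n)) a :
  (v *m Gm D lab) 0 a = (Wof v (OT D (lab a).1 (lab a).2) - Wof v (OL D (lab a).1 (lab a).2)) / 2.
Proof.
rewrite mxE /Wof -sumrB mulr_suml; apply: eq_bigr => k _; rewrite mxE /ind; ring.
Qed.

Theorem theorem4p6 (m n : nat) (hm : (0 < m)%N) (hn : (0 < n)%N)
  (D : diagram m n) (N : nat) (lab : 'I_N -> 'I_m * 'I_n)
  (lab_inj : injective lab)
  (lab_onto : forall c : 'I_m * 'I_n, ~~ D c.1 c.2 <-> exists k, lab k = c) :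
  kerdim (perm_matrix (m + n) (omega m n) + perm_matrix (m + n) (restricted_perm D))
  = kerdim (MD D lab).
Proof.
have white : forall a, ~~ blackn D (lab a).1 (lab a).2.
  by move=> a; rewrite blackn_ord; apply/lab_onto; exists a.
have getlab : forall i j, (i < m)%N -> (j < n)%N -> ~~ blackn D i j ->
    exists a, ((lab a).1 : nat) = i /\ ((lab a).2 : nat) = j.
  move=> i j hi hj Hb.
  have E := blackn_ord D (Ordinal hi) (Ordinal hj); simpl in E.
  have [a ha] : exists a, lab a = (Ordinal hi, Ordinal hj).
    by apply/lab_onto; rewrite /= -E.
  by exists a; rewrite ha.
apply/eqP; rewrite eqn_leq; apply/andP; split.
- apply: (@kerdim_le _ _ _ _ (Gm D lab) (Fm lab)) => v Hv.
  move/(Pker D hm hn): Hv => [HT HL].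
  set W := Wof v; set X := Xof lab (v *m Gm D lab).
  have hX : forall i j, (i<m)%N -> (j<n)%N ->
      X i j = if blackn D i j then 0 else (W (OT D i j) - W (OL D i j)) / 2.
    move=> i j hi hj; case Hb: (blackn D i j); first exact: Xof_black.
    have [a [e1 e2]] := getlab i j hi hj (negbT Hb).
    by rewrite /X -e1 -e2 Xof_lab // Gm_E.
  have [hA hB] := dir2 hX.
  split.
    apply/rowv0 => a; rewrite MD_row -/X.
    have ha1 := ltn_ord (lab a).1; have ha2 := ltn_ord (lab a).2.
    rewrite hA; try lia. rewrite hB; try lia. rewrite hA; try lia. rewrite hB; try lia.
    rewrite hX // (negbTE (white a)).
    have := HT _ ha2; have := HL _ ha1. rewrite -/W. lra.
  apply/rowP => k; rewrite Fm_E; have hk := ltn_ord k.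
  case: ifP => hmk.
    rewrite hA; try lia.
    have := HT ((k : nat) - m)%N (ltac:(lia)).
    have -> : (m + ((k : nat) - m).+1 = (k : nat).+1)%N by lia.
    rewrite -/W /W Wof_val; lra.
  rewrite hB; try lia.
  have := HL (m - (k : nat).+1)%N (ltac:(lia)).
  have -> : (m - (m - (k : nat).+1) = (k : nat).+1)%N by lia.
  rewrite -/W /W Wof_val; lra.
- apply: (@kerdim_le _ _ _ _ (Fm lab) (Gm D lab)) => u Hu.
  set X := Xof lab u; set W := Wof (u *m Fm lab).
  have hX : forall i j, (i<m)%N -> (j<n)%N -> blackn D i j -> X i j = 0.
    by move=> i j _ _; apply: Xof_black.
  have hM : forall i j, (i<m)%N -> (j<n)%N -> ~~ blackn D i j ->
     2 * Asum X i j + 2 * Bsum X i j + 2 * X i j - Asum X m j - Bsum X i n = 0.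
    move=> i j hi hj Hb; have [a [e1 e2]] := getlab i j hi hj Hb.
    rewrite -e1 -e2 -(MD_row D); by move/rowv0: Hu.
  have hWT : forall j, (j<n)%N -> W (m + j.+1)%N = Asum X m j.
    move=> j hj; have hk : (m + j < m + n)%N by lia.
    have -> : (m + j.+1 = (Ordinal hk : nat).+1)%N by rewrite addnS.
    rewrite /W Wof_val Fm_E /= ifT; last lia.
    by have -> : (m + j - m = j)%N by lia.
  have hWL : forall i, (i<m)%N -> W (m - i)%N = - Bsum X i n.
    move=> i hi; have hk : (m - i.+1 < m + n)%N by lia.
    have -> : (m - i = (Ordinal hk : nat).+1)%N by rewrite /=; lia.
    rewrite /W Wof_val Fm_E /= ifF; last lia.
    by have -> : (m - (m - i.+1).+1 = i)%N by lia.
  have inv := dir1 hX hM hWT hWL.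
  split.
    apply/(Pker D hm hn); split.
      move=> j hj; have [T _] := inv (m + j)%N m j erefl.
      have := T (leqnn m) hj; have := hWT j hj. rewrite -/W. lra.
    move=> i hi; have [_ L] := inv (i + n)%N i n erefl.
    have := L hi (leqnn n); have := hWL i hi. rewrite -/W. lra.
  apply/rowP => a; rewrite Gm_E -/W -(Xof_lab lab_inj) -/X.
  have ha1 := ltn_ord (lab a).1; have ha2 := ltn_ord (lab a).2.
  have [T L] := inv _ (lab a).1 (lab a).2 erefl.
  have := T (ltnW ha1) ha2; have := L ha1 (ltnW ha2).
  have := hM _ _ ha1 ha2 (white a). lra.
Qed.
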